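(* Let $\mathcal S\in\{\mathcal C,\mathcal E\}$ and $k\ge1$. Then $$\Big(\sum_{n\ge0}\#_{\mathcal S}\{(0,0)\xrightarrow{n}(k-i,i)\}t^n\Big)_{0\le i\le k}=\sum_{(n_1,\dots,n_p)\in\mathcal C_k}t^p\,J(n_1)_{n_1+1}F_{n_1+1}\,J(n_2)_{n_1+n_2+1}F_{n_1+n_2+1}\cdots J(n_p)_{n_1+\cdots+n_p+1}F_{n_1+\cdots+n_p+1}.$$
   Context: Let $\mathbb N=\{0,1,2,\dots\}$, $\mathcal C=\{(-1,1),(0,1),(1,1),(1,0),(1,-1)\}$, $\mathcal E=\{(-1,1),(0,1),(1,1),(1,-1)\}$. For a step set $\mathcal S$, $\#_{\mathcal S}\{(0,0)\xrightarrow{n}(i,j)\}$ is the number of sequences $p_0=(0,0),p_1,\dots,p_n=(i,j)$ of points of $\mathbb N^2$ with $p_m-p_{m-1}\in\mathcal S$. $\mathcal C_k$ is the set of all ordered tuples $(n_1,\dots,n_p)$ ($p\ge1$) with each $n_r\in\{1,2\}$ and $n_1+\cdots+n_p=k$. For $n\ge2$, $F_n\in\mathcal M_{n,n}(\mathbb R(t))$ is the inverse of the $n\times n$ tridiagonal matrix with diagonal entries $1$ and entries immediately above and below the diagonal equal to $-t$; its entries are identified with their power series in $t$. For $m\ge3$, $A_m\in\mathcal M_{m-2,m}(\mathbb R)$ has entries $(A_m)_{r,r+1}=1$ ($1\le r\le m-2$) and $0$ elsewhere. For $m\ge2$, $D_m\in\mathcal M_{m-1,m}(\mathbb R)$ has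 $(D_m)_{r,r+1}=1$ and $0$ elsewhere, and $B_m\in\mathcal M_{m-1,m}(\mathbb R)$ has $(B_m)_{r,r}=(B_m)_{r,r+1}=1$ ($1\le r\le m-1$) and $0$ elsewhere. Set $J(2)_m=A_m$; $J(1)_m=B_m$ if $\mathcal S=\mathcal C$ and $J(1)_m=D_m$ if $\mathcal S=\mathcal E$. The entries of the row vector are indexed by $i=0,\dots,k$, corresponding to the point $(k-i,i)$. *)

(* Defs.v *)
From Stdlib Require Import FunctionalExtensionality.
From mathcomp Require Import all_boot all_order all_algebra.
Set Implicit Arguments. Unset Strict Implicit. Unset Printing Implicit Defensive.
Import Order.TTheory GRing.Theory Num.Theory.
Local Open Scope ring_scope.

Inductive stepset := SC | SE.

Definition steps (S : stepset) : seq (int * int) :=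
  match S with
  | SC => [:: (-1, 1); (0, 1); (1, 1); (1, 0); (1, -1)]
  | SE => [:: (-1, 1); (0, 1); (1, 1); (1, -1)]
  end.

(* A walk of length n is encoded by its sequence of steps (indices into the
   duplicate-free list [steps S]); p_j is the sum of the first j steps. *)
Definition walk_pos (S : stepset) (n : nat) (w : n.-tuple 'I_(size (steps S)))
  (j : nat) : int * int :=
  (\sum_(l < n | (l < j)%N) (nth (0, 0) (steps S) (tnth w l)).1,
   \sum_(l < n | (l < j)%N) (nth (0, 0) (steps S) (tnth w l)).2).

Definition nb_walks (S : stepset) (n x y : nat) : nat :=
  #|[set w : n.-tuple 'I_(size (steps S)) |
      [forall j : 'I_n.+1, (0 <= (walk_pos w j).1) && (0 <= (walk_pos w j).2)]
      && (walk_pos w n == (x%:Z, y%:Z))]|.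

(* A (m x n) matrix of power series in t, given by its coefficient sequence. *)
Definition psmx (m n : nat) := nat -> 'M[int]_(m, n).

Definition psmul m n p (A : psmx m n) (B : psmx n p) : psmx m p :=
  fun d => \sum_(j < d.+1) A j *m B (d - j)%N.

Definition pscst m n (M : 'M[int]_(m, n)) : psmx m n :=
  fun d => if d == 0%N then M else 0.

Definition psshift m n (p : nat) (A : psmx m n) : psmx m n :=
  fun d => if (p <= d)%N then A (d - p)%N else 0.

(* coefficient of t^d in entry (0,i) of a row vector (0 if out of range) *)
Definition psentry m (v : psmx 1 m) (i d : nat) : int :=
  if (insub i : option 'I_m) is Some j then v d ord0 j else 0.

Definition Tmx (n : nat) : 'M[int]_n :=
  \matrix_(i < n, j < n) (if (i == j.+1 :> nat) || (j == i.+1 :> nat) then 1 else 0).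

(* the tridiagonal matrix with 1 on the diagonal and -t off the diagonal *)
Definition Tridiag (n : nat) : psmx n n :=
  fun d => if d == 0%N then 1%:M else if d == 1%N then - Tmx n else 0.

(* F_n : its inverse, as a power series (Neumann series) *)
Definition Fps (n : nat) : psmx n n := fun d => Tmx n ^+ d.

Lemma Fps_inverse (n : nat) : psmul (Tridiag n) (Fps n) = pscst 1%:M.
Proof.
apply: functional_extensionality => d; rewrite /psmul /pscst /Tridiag /Fps.
case: d => [|d]; first by rewrite big_ord1 /= mul1mx expr0.
rewrite big_ord_recl big_ord_recl big1 /=.
  by rewrite mul1mx subn0 subSS subn0 exprS mulNmx -mulmxE addr0 subrr.
by move=> j _ /=; rewrite mul0mx.
Qed.


(* Amx m = A_{m+2} : (m) x (m+2), entries (r, r+1) (1-indexed) equal 1 *)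
Definition Amx (m : nat) : 'M[int]_(m, m.+2) :=
  \matrix_(i < m, j < m.+2) (if (j == i.+1 :> nat) then 1 else 0).
(* Dmx m = D_{m+1} : (m) x (m+1), entries (r, r+1) equal 1 *)
Definition Dmx (m : nat) : 'M[int]_(m, m.+1) :=
  \matrix_(i < m, j < m.+1) (if (j == i.+1 :> nat) then 1 else 0).
(* Bmx m = B_{m+1} : (m) x (m+1), entries (r, r) and (r, r+1) equal 1 *)
Definition Bmx (m : nat) : 'M[int]_(m, m.+1) :=
  \matrix_(i < m, j < m.+1)
    (if (j == i :> nat) || (j == i.+1 :> nat) then 1 else 0).

(* Jmx S n m = J(n)_{n+m} (an m x (n+m) matrix); junk 0 for n not in {1,2} *)
Definition Jmx (S : stepset) (n m : nat) : 'M[int]_(m, n + m) :=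
  match n return 'M[int]_(m, n + m) with
  | 1 => match S with SC => Bmx m | SE => Dmx m end
  | 2 => Amx m
  | _ => 0
  end.

Fixpoint tgt (m : nat) (s : seq nat) : nat :=
  if s is n :: s' then tgt (n + m) s' else m.

Fixpoint chainprod (S : stepset) (m : nat) (s : seq nat) :
  psmx 1 m -> psmx 1 (tgt m s) :=
  match s return psmx 1 m -> psmx 1 (tgt m s) with
  | [::] => fun v => v
  | n :: s' => fun v =>
      chainprod S s' (psmul (psmul v (pscst (Jmx S n m))) (Fps (n + m)))
  end.

Definition is_composition (k : nat) (s : seq nat) : bool :=
  [&& (0 < size s)%N, all (fun x => (x == 1) || (x == 2))%N s & sumn s == k].

(* Main.v *)
Require Import Defs.
From mathcomp Require Import all_boot all_order all_algebra.
Import Order.TTheory GRing.Theory Num.Theory.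
Local Open Scope ring_scope.
From mathcomp Require Import zify ring.
From Stdlib Require Import FunctionalExtensionality.

Definition fn := nat -> nat -> int.

Fixpoint mulF_aux (N : nat) (f : fn) (d : nat) {struct d} : nat -> int :=
  match d with
  | 0 => fun j => if (j < N)%N then f j 0%N else 0
  | d'.+1 => fun j => if (j < N)%N then
       f j d'.+1 + (if (0 < j)%N then mulF_aux N f d' j.-1 else 0)
                 + (if (j.+1 < N)%N then mulF_aux N f d' j.+1 else 0)
       else 0
  end.
Definition mulF N f : fn := fun j d => mulF_aux N f d j.

Definition Jent (S : stepset) (n i j : nat) : int :=
  match n with
  | 1 => match S with
         | SC => if (j == i) || (j == i.+1) then 1 else 0
         | SE => if j == i.+1 then 1 else 0 end
  | 2 => if j == i.+1 then 1 else 0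
  | _ => 0 end.

Definition mulJ S n m (f : fn) : fn := fun j d =>
  if (j < n + m)%N then \sum_(i < m) f i d * Jent S n i j else 0.

Fixpoint Phi S (s : seq nat) (m : nat) (f : fn) : fn :=
  match s with
  | [::] => f
  | n :: s' => Phi S s' (n + m) (mulF (n + m) (mulJ S n m f))
  end.

Definition shp (p : nat) (g : fn) : fn := fun j d => if (p <= d)%N then g j (d - p)%N else 0.

Definition delta : fn := fun j d => if (j == 0%N) && (d == 0%N) then 1 else 0.

Lemma psentry_val m (v : psmx 1 m) (i : 'I_m) d : psentry v i d = v d ord0 i.
Proof. by rewrite /psentry valK. Qed.

Lemma psentry_out m (v : psmx 1 m) i d : (m <= i)%N -> psentry v i d = 0.
Proof. by move=> H; rewrite /psentry insubF // ltnNge H. Qed.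

Lemma psentry_shift m (v : psmx 1 m) p i d :
  psentry (psshift p v) i d = shp p (psentry v) i d.
Proof.
rewrite /psentry /psshift /shp; case: insubP => [j _ _|_]; last by case: ifP.
by case: ifP => //; rewrite mxE.
Qed.

Lemma psentry_cst1 : psentry (pscst (1%:M : 'M[int]_1)) = delta.
Proof.
apply: functional_extensionality => i; apply: functional_extensionality => d.
rewrite /psentry /pscst /delta; case: insubP => [j Hj Hv|Hj].
  rewrite -Hv; have -> : j = ord0 by apply: val_inj; case: j {Hj Hv} => [[]].
  by case: ifP => _ //=; rewrite ?mxE.
case: i Hj => //.
Qed.

Lemma psmul_cst m n p (v : psmx m n) (M : 'M[int]_(n, p)) d :
  psmul v (pscst M) d = v d *m M.
Proof.
rewrite /psmul /pscst big_ord_recr /= subnn eqxx big1 ?add0r // => i _.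
by rewrite subn_eq0 leqNgt ltn_ord mulmx0.
Qed.

Lemma Jmx_ent S n m (i : 'I_m) (j : 'I_(n + m)) : Jmx S n m i j = Jent S n i j.
Proof.
case: n j => [|[|[|n]]] j /=; rewrite ?mxE //; by case: S; rewrite mxE.
Qed.

Lemma psentry_mulJ S n m (v : psmx 1 m) :
  psentry (psmul v (pscst (Jmx S n m))) = mulJ S n m (psentry v).
Proof.
apply: functional_extensionality => j; apply: functional_extensionality => d.
rewrite /psentry /mulJ; case: insubP => [k Hk Hv|Hk]; last by rewrite ifN.
rewrite Hk psmul_cst mxE; apply: eq_bigr => i _.
by rewrite Jmx_ent -Hv valK.
Qed.

Lemma psmulF_rec N (w : psmx 1 N) d :
  psmul w (Fps N) d.+1 = w d.+1 + psmul w (Fps N) d *m Tmx N.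
Proof.
rewrite /psmul big_ord_recr /= subnn /Fps expr0 mulmx1 addrC; congr (_ + _).
rewrite mulmx_suml; apply: eq_bigr => i _.
by rewrite -mulmxA subSn ?exprSr ?mulmxE // -ltnS.
Qed.

Lemma psmulF_0 N (w : psmx 1 N) : psmul w (Fps N) 0 = w 0%N.
Proof. by rewrite /psmul big_ord1 /Fps expr0 mulmx1. Qed.

Lemma sum_ind N a (G : nat -> int) :
  \sum_(i < N) G i * (if (i : nat) == a then 1 else 0) = if (a < N)%N then G a else 0.
Proof.
case: ifP => H.
  rewrite (bigD1 (Ordinal H)) //= eqxx mulr1 big1 ?addr0 // => i Hi.
  by rewrite ifN ?mulr0 //; apply: contra Hi => /eqP Hi; apply/eqP/val_inj.
rewrite big1 // => i _; rewrite ifN ?mulr0 //; apply/eqP => E.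
by move: (ltn_ord i); rewrite E H.
Qed.

Lemma Tent_split (a b : nat) :
  (if (a == b.+1) || (b == a.+1) then 1 else 0 : int) =
  (if a == b.+1 then 1 else 0) + (if a == b.-1 then (if (0 < b)%N then 1 else 0) else 0).
Proof.
case: b => [|b]; first by case: a => [|[|a]].
rewrite /= eqSS; case: (eqVneq a b.+2) => [->|H1] /=.
  by rewrite ifN ?addr0 //; lia.
by rewrite eq_sym add0r.
Qed.

Lemma sum_T N j (G : nat -> int) :
  \sum_(i < N) G i * Tmx N i j =
  (if (0 < j)%N then G j.-1 else 0) + (if (j.+1 < N)%N then G j.+1 else 0).
Proof.
transitivity (\sum_(i < N) (G i * (if (i : nat) == j.+1 then 1 else 0)
   + G i * (if (i:nat) == j.-1 then (if (0 < j)%N then 1 else 0) else 0))).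
  by apply: eq_bigr => i _; rewrite mxE Tent_split mulrDr.
rewrite big_split /= sum_ind addrC; congr (_ + _).
case: (ltnP 0 j) => Hj.
  rewrite (eq_bigr (fun i : 'I_N => G i * (if (i : nat) == j.-1 then 1 else 0))); last first.
    by move=> i _; case: ifP.
  by rewrite sum_ind; have -> : (j.-1 < N)%N by case: (val j) Hj (ltn_ord j) => // n _ /ltnW.
by rewrite big1 // => i _; case: ifP; rewrite mulr0.
Qed.

Lemma psentry_mulF N (w : psmx 1 N) :
  psentry (psmul w (Fps N)) = mulF N (psentry w).
Proof.
apply: functional_extensionality => j; apply: functional_extensionality => d.
rewrite /mulF; elim: d j => [|d IH] j /=.
  case: ifP => H; last by rewrite psentry_out // leqNgt H.
  by rewrite -[j]/(val (Ordinal H)) !psentry_val psmulF_0.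
case: ifP => H; last by rewrite psentry_out // leqNgt H.
rewrite -[j]/(val (Ordinal H)) !psentry_val psmulF_rec !mxE.
rewrite (eq_bigr (fun i : 'I_N => (fun k => psentry (psmul w (Fps N)) k d) i * Tmx N i (Ordinal H))); last first.
  by move=> i _; rewrite psentry_val.
rewrite (sum_T _ _ (fun k => psentry (psmul w (Fps N)) k d)) /= -addrA; congr (_ + (_ + _)).
  by case: ifP => // Hj; rewrite IH.
by case: ifP => // Hj; rewrite IH.
Qed.

Lemma chainprod_entry S s : forall m (v : psmx 1 m),
  psentry (chainprod S s v) = Phi S s m (psentry v).
Proof.
elim: s => [|n s IH] m v //=.
by rewrite IH psentry_mulF psentry_mulJ.
Qed.

Lemma Phi_rcons S s n : forall m f,
  Phi S (rcons s n) m f = mulF (n + (sumn s + m)) (mulJ S n (sumn s + m) (Phi S s m f)).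
Proof.
elim: s => [|a s IH] m f //=.
by rewrite IH (_ : (sumn s + (a + m) = a + sumn s + m)%N) //; lia.
Qed.

Section TupleRcons.
Variables (R : Type) (idx : R) (op : Monoid.com_law idx) (T : finType) (n : nat).

Definition tr_h (p : T * n.-tuple T) : n.+1.-tuple T := rcons_tuple p.2 p.1.
Definition tr_h' (w : n.+1.-tuple T) : T * n.-tuple T :=
  (last (thead w) (behead w), belast_tuple (thead w) (behead_tuple w)).

Lemma tr_eta (w : n.+1.-tuple T) : val w = thead w :: behead w.
Proof. by rewrite {1}(tuple_eta w). Qed.

Lemma tr_hK : cancel tr_h tr_h'.
Proof.
move=> [c w]; rewrite /tr_h /tr_h' /=.
have E := tr_eta (rcons_tuple w c).
have /rcons_inj [E1 E2] : rcons w c = rcons (belast (thead (rcons_tuple w c)) (behead (rcons_tuple w c)))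
   (last (thead (rcons_tuple w c)) (behead (rcons_tuple w c))).
  by rewrite -lastI -E.
congr (_, _) => //; apply: val_inj => /=; by rewrite -E1.
Qed.

Lemma tr_h'K : cancel tr_h' tr_h.
Proof.
move=> w; apply: val_inj; rewrite /tr_h /tr_h' /=.
by rewrite -lastI -tr_eta.
Qed.

Lemma big_tuple_rcons (P : pred (n.+1.-tuple T)) (F : n.+1.-tuple T -> R) :
  \big[op/idx]_(w | P w) F w =
  \big[op/idx]_(c : T) \big[op/idx]_(w : n.-tuple T | P (rcons_tuple w c)) F (rcons_tuple w c).
Proof.
rewrite pair_big_dep (reindex tr_h) /=; last by exists tr_h' => x _; [apply: tr_hK|apply: tr_h'K].
by apply: eq_bigl => -[c w].
Qed.
End TupleRcons.

Module WalksM.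
Set Implicit Arguments. Unset Strict Implicit.

Section Walks.
Variable S : stepset.
Local Notation K := 'I_(size (steps S)).
Definition stp (c : K) := nth (0, 0) (steps S) c.
Definition good n (w : n.-tuple K) :=
  [forall j : 'I_n.+1, (0 <= (walk_pos w j).1) && (0 <= (walk_pos w j).2)].
Definition cnt n (p : int * int) :=
  #|[set w : n.-tuple K | good w && (walk_pos w n == p)]|.

Lemma tnth_rcons_widen n (w : n.-tuple K) c (l : 'I_n) :
  tnth (rcons_tuple w c) (widen_ord (leqnSn n) l) = tnth w l.
Proof. by rewrite !(tnth_nth c) /= nth_rcons size_tuple ltn_ord. Qed.

Lemma tnth_rcons_max n (w : n.-tuple K) c :
  tnth (rcons_tuple w c) ord_max = c.
Proof. by rewrite (tnth_nth c) /= nth_rcons size_tuple ltnn eqxx. Qed.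

Lemma sum_rcons n (w : n.-tuple K) c j (F : K -> int) :
  \sum_(l < n.+1 | (l < j)%N) F (tnth (rcons_tuple w c) l) =
  \sum_(l < n | (l < j)%N) F (tnth w l) + (if (n < j)%N then F c else 0).
Proof.
rewrite big_mkcond big_ord_recr /= tnth_rcons_max; congr (_ + _).
by rewrite [RHS]big_mkcond; apply: eq_bigr => l _; rewrite tnth_rcons_widen.
Qed.

Lemma pos_rcons_le n (w : n.-tuple K) c j : (j <= n)%N ->
  walk_pos (rcons_tuple w c) j = walk_pos w j.
Proof.
by move=> Hj; rewrite /walk_pos (sum_rcons w c j (fun x => (stp x).1)) (sum_rcons w c j (fun x => (stp x).2)) ltnNge Hj !addr0.
Qed.

Lemma pos_rcons_last n (w : n.-tuple K) c :
  walk_pos (rcons_tuple w c) n.+1 =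
  ((walk_pos w n).1 + (stp c).1, (walk_pos w n).2 + (stp c).2).
Proof.
rewrite /walk_pos (sum_rcons w c n.+1 (fun x => (stp x).1)) (sum_rcons w c n.+1 (fun x => (stp x).2)) ltnSn /=; congr (_ + _, _ + _);
  by apply: eq_bigl => l /=; rewrite ltn_ord (leq_trans (ltn_ord l)) ?leqnSn.
Qed.

Lemma good_rcons n (w : n.-tuple K) c :
  good (rcons_tuple w c) =
  good w && (0 <= (walk_pos w n).1 + (stp c).1) && (0 <= (walk_pos w n).2 + (stp c).2).
Proof.
apply/idP/idP.
  move=> /forallP H; rewrite -andbA; apply/andP; split.
    apply/forallP => j; have := H (widen_ord (leqnSn _) j).
    by rewrite (_ : nat_of_ord (widen_ord _ j) = j) // pos_rcons_le // -ltnS.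
  by have := H ord_max; rewrite (_ : nat_of_ord (@ord_max n.+1) = n.+1) // pos_rcons_last.
move=> /andP [/andP [/forallP H H1] H2]; apply/forallP => j.
have := ltn_ord j; rewrite ltnS leq_eqVlt => /orP [/eqP Ej|Hj].
  by rewrite Ej pos_rcons_last H1 H2.
by have := H (Ordinal Hj); rewrite (_ : nat_of_ord (Ordinal Hj) = j) // pos_rcons_le // -ltnS.
Qed.

Lemma cnt_neg n p : ~~ ((0 <= p.1) && (0 <= p.2)) -> cnt n p = 0%N.
Proof.
move=> Hp; apply/eqP; rewrite cards_eq0; apply/eqP/setP => w; rewrite !inE.
apply/negP => /andP [/forallP H /eqP E]; have := H ord_max.
by have := H ord_max; rewrite (_ : nat_of_ord (@ord_max n) = n) // E => HH; move: Hp; rewrite HH.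
Qed.

Lemma cnt0 p : cnt 0 p = (p == (0, 0)).
Proof.
rewrite /cnt.
have -> : [set w : 0.-tuple K | good w && (walk_pos w 0 == p)] =
   if p == (0, 0) then setT else set0.
  apply/setP => w; rewrite !inE.
  have E : forall j, walk_pos w j = (0, 0) by move=> j; rewrite /walk_pos !big_ord0.
  have -> : good w by apply/forallP => j; rewrite E.
  by rewrite E eq_sym; case: ifP; rewrite inE.
case: ifP => _; last by rewrite cards0.
by rewrite cardsT card_tuple.
Qed.

Definition mv (p : int * int) (c : K) : int * int := (p.1 - (stp c).1, p.2 - (stp c).2).

Lemma cntS n p : cnt n.+1 p =
  if (0 <= p.1) && (0 <= p.2) then
    (\sum_(c : K) cnt n (mv p c))%N
  else 0%N.
Proof.
case: ifP => Hp; last by rewrite cnt_neg // Hp.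
rewrite /cnt -sum1dep_card big_tuple_rcons; apply: eq_bigr => c _.
rewrite -sum1dep_card; apply: eq_bigl => w /=.
rewrite /mv good_rcons pos_rcons_last.
case: (walk_pos w n) => x y; case: p Hp => a b /= /andP [Ha Hb].
rewrite !xpair_eqE; case: (good w) => //=.
apply/idP/idP.
  by move=> /andP [/andP [_ _] /andP [/eqP E1 /eqP E2]]; rewrite -E1 -E2 !addrK ?eqxx.
by move=> /andP [/eqP -> /eqP ->]; rewrite !subrK Ha Hb !eqxx.
Qed.
End Walks.

End WalksM.
Import WalksM.

Ltac fext := apply: functional_extensionality => ?; apply: functional_extensionality => ?.

Lemma sum_if (I : Type) (r : seq I) (P : pred I) (b : bool) (F : I -> int) :
  \sum_(z <- r | P z) (if b then F z else 0) = if b then \sum_(z <- r | P z) F z else 0.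
Proof. by case: b => //; rewrite big1. Qed.

Section Lin.
Variables (I : Type) (r : seq I) (P : pred I) (F : I -> fn).

Lemma mulJ_sum S n m :
  mulJ S n m (fun i d => \sum_(z <- r | P z) F z i d) =
  (fun j d => \sum_(z <- r | P z) mulJ S n m (F z) j d).
Proof.
fext; rewrite /mulJ sum_if; case: ifP => // _.
rewrite exchange_big /=; apply: eq_bigr => i _; by rewrite mulr_suml.
Qed.

Lemma mulF_sum N :
  mulF N (fun i d => \sum_(z <- r | P z) F z i d) =
  (fun j d => \sum_(z <- r | P z) mulF N (F z) j d).
Proof.
apply: functional_extensionality => j; apply: functional_extensionality => d.
rewrite /mulF; elim: d j => [|d IH] j /=; first by rewrite sum_if.
rewrite sum_if; case: ifP => // _.
rewrite !big_split /= !IH; congr (_ + _ + _); by rewrite sum_if.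
Qed.

Lemma shp_sum p :
  shp p (fun i d => \sum_(z <- r | P z) F z i d) =
  (fun j d => \sum_(z <- r | P z) shp p (F z) j d).
Proof. by fext; rewrite /shp sum_if. Qed.
End Lin.

Lemma mulJ_shp S n m p g : mulJ S n m (shp p g) = shp p (mulJ S n m g).
Proof.
apply: functional_extensionality => j; apply: functional_extensionality => d.
rewrite /mulJ /shp; case: (p <= d)%N; case: (j < n + m)%N => //.
by rewrite big1 // => i _; rewrite mul0r.
Qed.

Lemma mulF_shp N p g : mulF N (shp p g) = shp p (mulF N g).
Proof.
apply: functional_extensionality => j; apply: functional_extensionality => d.
rewrite /mulF /shp; elim: d j => [|d IH] j /=.
  by case: p => [|p] //=; case: ifP.
rewrite !IH; case: (ltngtP p d.+1) => Hp.
- have Hpd : (p <= d)%N by [].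
  by rewrite Hpd subSn.
- have Hpd : (p <= d)%N = false by lia.
  by rewrite Hpd; case: (j < N)%N; case: (0 < j)%N; case: (j.+1 < N)%N.
- have F : (d.+1 <= d)%N = false by lia.
  rewrite Hp subnn F /=.
  by case: (j < N)%N; case: (0 < j)%N; case: (j.+1 < N)%N; rewrite ?addr0.
Qed.

Lemma shp1_shp p g : shp 1 (shp p g) = shp p.+1 g.
Proof.
apply: functional_extensionality => j; apply: functional_extensionality => d.
by rewrite /shp; case: d => [|d] //=; rewrite subn1 /= ltnS subSS.
Qed.

Lemma shp0 g : shp 0 g = g.
Proof. by fext; rewrite /shp subn0. Qed.

Lemma shp_comm S n m N p g :
  shp p.+1 (mulF N (mulJ S n m g)) = shp 1 (mulF N (mulJ S n m (shp p g))).
Proof. by rewrite mulJ_shp mulF_shp shp1_shp. Qed.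

Lemma shp1_mulF_rec N H j d :
  shp 1 (mulF N H) j d.+1 =
  if (j < N)%N then H j d + (if (0 < j)%N then shp 1 (mulF N H) j.-1 d else 0)
                          + (if (j.+1 < N)%N then shp 1 (mulF N H) j.+1 d else 0)
  else 0.
Proof.
rewrite /shp /mulF /= subn1 /=; case: d => [|d] /=.
  by case: (j < N)%N; case: (0 < j)%N; case: (j.+1 < N)%N; rewrite ?addr0.
by rewrite subSS subn0.
Qed.

Lemma shp1_0 g j : shp 1 g j 0 = 0.
Proof. by []. Qed.

Definition mp (t : seq 'I_2) : seq nat := [seq (val x).+1 | x <- t].
Definition G S (s : seq nat) : fn := shp (size s) (Phi S s 1 delta).
Definition Tin S (p k : nat) : fn := fun i d =>
  \sum_(t : p.-tuple 'I_2 | sumn (mp t) == k) G S (mp t) i d.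
Definition Tsum S (P k : nat) : fn := fun i d => \sum_(p < P) Tin S p k i d.
Definition Tk S k := Tsum S k.+1 k.

Lemma size_le_sumn (t : seq 'I_2) : (size t <= sumn (mp t))%N.
Proof. by elim: t => //= x t IH; rewrite addSn ltnS (leq_trans IH) // leq_addl. Qed.

Lemma Tin_big S p k : (k < p)%N -> Tin S p k = fun _ _ => 0.
Proof.
move=> H; apply: functional_extensionality => i; apply: functional_extensionality => d.
rewrite /Tin big_pred0 // => t; apply/negP => /eqP E.
by have := size_le_sumn t; rewrite E size_tuple leqNgt H.
Qed.

Lemma Tsum_widen S P k : (k < P)%N -> Tsum S P k = Tk S k.
Proof.
move=> H; apply: functional_extensionality => i; apply: functional_extensionality => d.
rewrite /Tk /Tsum (big_ord_widen P (fun p => Tin S p k i d) H) [RHS]big_mkcond.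
apply: eq_bigr => p _ /=; case: ifP => // Hp.
by rewrite Tin_big // ltnNge -ltnS Hp.
Qed.

Lemma Tk0 S : Tk S 0 = delta.
Proof.
apply: functional_extensionality => i; apply: functional_extensionality => d.
rewrite /Tk /Tsum big_ord1 /Tin /=.
rewrite (eq_bigl (fun _ => true)); last by move=> t; rewrite (tuple0 t).
rewrite (eq_bigr (fun _ => delta i d)); last first.
  by move=> t _; rewrite (tuple0 t) /G /= shp0.
by rewrite sumr_const card_tuple /= expn0.
Qed.

Lemma G_rcons S (t : seq 'I_2) (x : 'I_2) L : (sumn (mp t) + (val x).+1)%N = L ->
  G S (mp (rcons t x)) = shp 1 (mulF L.+1 (mulJ S x.+1 (L - x) (G S (mp t)))).
Proof.
move=> E; rewrite /G /mp map_rcons size_rcons Phi_rcons -/(mp t).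
rewrite -[val x]/(nat_of_ord x) in E *.
rewrite (_ : (sumn (mp t) + 1 = L - x)%N); last by lia.
rewrite (_ : (x.+1 + (L - x) = L.+1)%N); last by lia.
by rewrite shp_comm size_map.
Qed.

Lemma Tk_rec S L : (0 < L)%N ->
  Tk S L = shp 1 (mulF L.+1 (fun j d =>
     \sum_(x < 2 | (x < L)%N) mulJ S x.+1 (L - x) (Tk S (L - x.+1)) j d)).
Proof.
move=> HL.
apply: functional_extensionality => i; apply: functional_extensionality => d.
have -> : shp 1 (mulF L.+1 (fun j d =>
     \sum_(x < 2 | (x < L)%N) mulJ S x.+1 (L - x) (Tk S (L - x.+1)) j d)) i d =
   \sum_(x < 2 | (x < L)%N) shp 1 (mulF L.+1 (mulJ S x.+1 (L - x) (Tk S (L - x.+1)))) i d.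
  by rewrite (mulF_sum _ _ _ (fun x : 'I_2 => mulJ S x.+1 (L - x) (Tk S (L - x.+1)))) shp_sum.
rewrite {1}/Tk /Tsum big_ord_recl.
rewrite {1}/Tin big_pred0; last first.
  by move=> t; rewrite (tuple0 t) /= eq_sym; apply/negbTE; rewrite -lt0n.
rewrite add0r.
transitivity (\sum_(p < L) \sum_(x < 2) \sum_(t : p.-tuple 'I_2 | (sumn (mp t) + x.+1 == L)%N)
   shp 1 (mulF L.+1 (mulJ S x.+1 (L - x) (G S (mp t)))) i d).
  apply: eq_bigr => p _; rewrite /Tin (big_tuple_rcons _ _ _ _ p).
  apply: eq_bigr => x _; apply: eq_big => [t|t /eqP E].
    by rewrite /mp /= map_rcons sumn_rcons.
  by rewrite /= (G_rcons S t x L) //; move: E; rewrite /mp /= map_rcons sumn_rcons.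
rewrite exchange_big [RHS]big_mkcond; apply: eq_bigr => x _ /=.
case: ifP => Hx; last first.
  rewrite big1 // => p _; rewrite big_pred0 // => t; apply/negP => /eqP E.
  by move: Hx; rewrite -E addnS ltnS leq_addl.
rewrite -(Tsum_widen S L); last by lia.
rewrite /Tsum mulJ_sum mulF_sum shp_sum; apply: eq_bigr => p _.
rewrite /Tin mulJ_sum mulF_sum shp_sum; apply: eq_bigl => t.
apply/eqP/eqP => E; lia.
Qed.

Section Main.
Variable S : stepset.

Definition cz d (p : int * int) : int := (cnt S d p)%:Z.
Definition lhs (L j d : nat) : int := cz d (L%:Z - j%:Z, j%:Z).

Lemma cz_neg d p : ~~ ((0 <= p.1) && (0 <= p.2)) -> cz d p = 0.
Proof. by move=> H; rewrite /cz cnt_neg. Qed.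

Lemma guardL M a d : (if (a < M.+1)%N then lhs M a d else 0) = cz d (M%:Z - a%:Z, a%:Z).
Proof.
case: ifP => // H; rewrite cz_neg //= negb_and; apply/orP; left; rewrite -ltNge; lia.
Qed.

Lemma guardP M a d : (if (0 < a)%N && (a.-1 < M.+1)%N then lhs M a.-1 d else 0)
  = cz d (M%:Z - a%:Z + 1, a%:Z - 1).
Proof.
case: a => [|a] /=; first by rewrite cz_neg //= negb_and; apply/orP; right; rewrite -ltNge; lia.
case: ifP => H.
  by rewrite /lhs; congr (cz _ (_, _)); lia.
by rewrite cz_neg //= negb_and; apply/orP; left; rewrite -ltNge; lia.
Qed.

Lemma sumJ1 m (f : nat -> int) (j : nat) :
  \sum_(i < m) f i * (if j == i.+1 then 1 else 0) =
  if (0 < j)%N && (j.-1 < m)%N then f j.-1 else 0.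
Proof.
case: j => [|j] /=; first by rewrite big1 // => i _; rewrite mulr0.
rewrite -sum_ind; apply: eq_bigr => i _; by rewrite eqSS eq_sym.
Qed.

Lemma sumJ0 m (f : nat -> int) (j : nat) :
  \sum_(i < m) f i * (if (j == i) || (j == i.+1) then 1 else 0) =
  (if (j < m)%N then f j else 0) + (if (0 < j)%N && (j.-1 < m)%N then f j.-1 else 0).
Proof.
rewrite -sum_ind -sumJ1 -big_split /=; apply: eq_bigr => i _; rewrite -mulrDr.
congr (_ * _); case: (eqVneq j i) => [->|H] /=.
  by rewrite ifN ?addr0 //; lia.
by rewrite add0r.
Qed.

Lemma mulJ_lhs1 M j d : (j <= M.+1)%N ->
  mulJ S 1 M.+1 (lhs M) j d =
  match S with
  | SC => cz d (M%:Z - j%:Z, j%:Z) + cz d (M%:Z - j%:Z + 1, j%:Z - 1)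
  | SE => cz d (M%:Z - j%:Z + 1, j%:Z - 1) end.
Proof.
move=> Hj; rewrite /mulJ ifT; last by lia.
case: S => /=.
  by rewrite (sumJ0 _ (fun i => lhs M i d)) guardL guardP.
by rewrite (sumJ1 _ (fun i => lhs M i d)) guardP.
Qed.

Lemma mulJ_lhs2 M j d : (j <= M.+2)%N ->
  mulJ S 2 M.+1 (lhs M) j d = cz d (M%:Z - j%:Z + 1, j%:Z - 1).
Proof.
move=> Hj; rewrite /mulJ ifT; last by lia.
by rewrite /= (sumJ1 _ (fun i => lhs M i d)) guardP.
Qed.
End Main.

Lemma main S L : forall j d, lhs S L j d = Tk S L j d.
Proof.
elim/ltn_ind: L => L IHL j d.
case: L IHL => [|L'] IHL.
  rewrite Tk0 /delta /lhs; case: j => [|j]; last first.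
    by rewrite cz_neg //= negb_and; apply/orP; left; rewrite -ltNge; lia.
  case: d => [|d]; first by rewrite /cz cnt0.
  rewrite /cz cntS /=; case: S IHL => IHL /=; rewrite !big_ord_recl big_ord0 /= !cnt_neg //.
have E := Tk_rec S L'.+1 erefl.
have IHf : forall m, (m < L'.+1)%N -> Tk S m = lhs S m.
  move=> m Hm; apply: functional_extensionality => a; apply: functional_extensionality => b.
  by rewrite IHL.
elim: d j => [|d IHd] j.
  rewrite E /shp /= /lhs /cz cnt0 xpair_eqE; case: j => [|j] //=.
  by rewrite andbF.
case: (ltnP L'.+1 j) => Hj.
  rewrite E shp1_mulF_rec ifF; last by lia.
  by rewrite /lhs cz_neg //= negb_and; apply/orP; left; rewrite -ltNge; lia.
rewrite E shp1_mulF_rec -E ifT; last by lia.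
rewrite big_mkcond !big_ord_recl big_ord0 /= -!IHd.
rewrite /bump /= subn0 subSS subn0 (IHf L') // (mulJ_lhs1 S L' j d Hj).
have Hj1 : (j.-1 < L'.+2)%N by apply: leq_ltn_trans (leq_pred j) _.
rewrite (_ : (if (0 < j)%N then lhs S L'.+1 j.-1 d else 0) =
   cz S d (L'.+1%:Z - j%:Z + 1, j%:Z - 1)); last by rewrite -guardP Hj1 andbT.
rewrite guardL /lhs /cz cntS ifT; last by rewrite /=; apply/andP; split; lia.
case: L' IHL E IHf IHd Hj Hj1 => [|L''] IHL E IHf IHd Hj Hj1 /=.
  have Z2 : cnt S d (1%:Z - j%:Z - 1, j%:Z - 1) = 0%N.
    by apply: cnt_neg; rewrite /= negb_and; case: (j) Hj => [|[|]] //.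
  case: S IHL E IHf IHd Z2 => IHL E IHf IHd Z2 /=; rewrite !big_ord_recl big_ord0 /mv /stp /= !PoszD Z2.
  - have -> : cnt SC d (0%:Z - j%:Z, j%:Z) = cnt SC d (1%:Z - j%:Z - 1, j%:Z - 0) by congr (cnt _ _ (_, _)); lia.
    have -> : cnt SC d (0%:Z - j%:Z + 1, j%:Z - 1) = cnt SC d (1%:Z - j%:Z - 0, j%:Z - 1) by congr (cnt _ _ (_, _)); lia.
    have -> : cnt SC d (1%:Z - j%:Z + 1, j%:Z - 1) = cnt SC d (1%:Z - j%:Z - -1, j%:Z - 1) by congr (cnt _ _ (_, _)); lia.
    have -> : cnt SC d (1%:Z - j.+1%:Z, j.+1%:Z) = cnt SC d (1%:Z - j%:Z - 1, j%:Z - -1) by congr (cnt _ _ (_, _)); lia.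
    ring.
  - have -> : cnt SE d (0%:Z - j%:Z + 1, j%:Z - 1) = cnt SE d (1%:Z - j%:Z - 0, j%:Z - 1) by congr (cnt _ _ (_, _)); lia.
    have -> : cnt SE d (1%:Z - j%:Z + 1, j%:Z - 1) = cnt SE d (1%:Z - j%:Z - -1, j%:Z - 1) by congr (cnt _ _ (_, _)); lia.
    have -> : cnt SE d (1%:Z - j.+1%:Z, j.+1%:Z) = cnt SE d (1%:Z - j%:Z - 1, j%:Z - -1) by congr (cnt _ _ (_, _)); lia.
    ring.
rewrite addn0 !subSS subn0 (IHf L'') // mulJ_lhs2 //.
case: S IHL E IHf IHd => IHL E IHf IHd /=; rewrite !big_ord_recl big_ord0 /mv /stp /= !PoszD.
- have -> : cnt SC d (L''.+1%:Z - j%:Z, j%:Z) = cnt SC d (L''.+2%:Z - j%:Z - 1, j%:Z - 0) by congr (cnt _ _ (_, _)); lia.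
  have -> : cnt SC d (L''.+1%:Z - j%:Z + 1, j%:Z - 1) = cnt SC d (L''.+2%:Z - j%:Z - 0, j%:Z - 1) by congr (cnt _ _ (_, _)); lia.
  have -> : cnt SC d (L''.+2%:Z - j%:Z + 1, j%:Z - 1) = cnt SC d (L''.+2%:Z - j%:Z - -1, j%:Z - 1) by congr (cnt _ _ (_, _)); lia.
  have -> : cnt SC d (L''.+2%:Z - j.+1%:Z, j.+1%:Z) = cnt SC d (L''.+2%:Z - j%:Z - 1, j%:Z - -1) by congr (cnt _ _ (_, _)); lia.
  rewrite /cz; have -> : cnt SC d (L''%:Z - j%:Z + 1, j%:Z - 1) = cnt SC d (L''.+2%:Z - j%:Z - 1, j%:Z - 1) by congr (cnt _ _ (_, _)); lia.
  ring.
- have -> : cnt SE d (L''.+1%:Z - j%:Z + 1, j%:Z - 1) = cnt SE d (L''.+2%:Z - j%:Z - 0, j%:Z - 1) by congr (cnt _ _ (_, _)); lia.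
  have -> : cnt SE d (L''.+2%:Z - j%:Z + 1, j%:Z - 1) = cnt SE d (L''.+2%:Z - j%:Z - -1, j%:Z - 1) by congr (cnt _ _ (_, _)); lia.
  have -> : cnt SE d (L''.+2%:Z - j.+1%:Z, j.+1%:Z) = cnt SE d (L''.+2%:Z - j%:Z - 1, j%:Z - -1) by congr (cnt _ _ (_, _)); lia.
  rewrite /cz; have -> : cnt SE d (L''%:Z - j%:Z + 1, j%:Z - 1) = cnt SE d (L''.+2%:Z - j%:Z - 1, j%:Z - 1) by congr (cnt _ _ (_, _)); lia.
  ring.
Qed.

Lemma is_comp_mp k (t : seq 'I_2) : (1 <= k)%N ->
  is_composition k (mp t) = (sumn (mp t) == k).
Proof.
move=> Hk; rewrite /is_composition; case: eqP => E; rewrite ?andbF ?andbT //.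
apply/andP; split.
  by case: t E => [|x t] //= E; move: Hk; rewrite -E.
by apply/allP => y /mapP [x _ ->]; case: x => [[|[|]]].
Qed.

Theorem proposition2p11 (S : stepset) (k : nat) :
  (1 <= k)%N ->
  forall i : nat, (i <= k)%N ->
  forall d : nat,
    (nb_walks S d (k - i) i)%:Z =
    \sum_(p < k.+1)
      \sum_(t : p.-tuple 'I_2 | is_composition k [seq (val x).+1 | x <- t])
        psentry (psshift p (chainprod S [seq (val x).+1 | x <- t]
                                       (pscst (1%:M : 'M[int]_1)))) i d.
Proof.
move=> Hk i Hi d.
have -> : (nb_walks S d (k - i) i)%:Z = lhs S k i d by rewrite /lhs /cz subzn.
rewrite main /Tk /Tsum; apply: eq_bigr => p _.
rewrite /Tin; apply: eq_big => [t|t _]; first by rewrite -/(mp t) is_comp_mp.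
rewrite -/(mp t) psentry_shift (chainprod_entry S _ 1) psentry_cst1 /G /mp size_map size_tuple.
done.
Qed.
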